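(* Let $1\le k\le d\le n-1$, $h=1$, $\beta=\frac{2M}{k(2d-k+3)}$ (assumed a positive integer), $\alpha=(d+1)\beta$ and $\alpha'=k\beta$. Then, over a sufficiently large finite field, there exist linear codes for $\mathrm{DSS}(n,k,d,1,\alpha,\alpha',\beta,M)$ such that when each of the $d$ surviving complete nodes and the repairing storage node transmits $\beta$ packets to the new node, the reconstruction property (any $k$ complete nodes recover the file) is maintained under failures/repairs.
   Context: $\mathrm{DSS}(n,k,d,h,\alpha,\alpha',\beta,M)$: a file of $M$ packets over $\mathrm{GF}(q)$ is stored on $n$ complete storage nodes of capacity $\alpha$ each (each storing linear combinations of the file packets) so that any $k$ of them reconstruct the file; in addition there are $h$ repairing storage nodes of capacity $\alpha'<\alpha$, which never fail and are never contacted by data collectors. When a complete node fails, a new node is created from $\beta$ packets (linear combinations of stored data) received from each of $d$ surviving complete nodes and from each of the $h$ repairing nodes; repair is functional. *)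

(* Defs.v *)
From HB Require Import structures.
From mathcomp Require Import all_boot all_order all_algebra.
Set Implicit Arguments. Unset Strict Implicit. Unset Printing Implicit Defensive.
Import GRing.Theory.
Local Open Scope ring_scope.

(* Every stored packet is a linear combination of
   the file packets, i.e. a row of coefficients in 'rV[F]_M.
   - complete node i stores an (alpha x M) coefficient matrix S i;
   - the (single, h = 1) repairing node stores an (alpha' x M) matrix R. *)

(* A failure/repair event: the failed complete node f and the set H of the d
   surviving complete nodes contacted as helpers. *)
Definition dss_event (n : nat) := ('I_n * {set 'I_n})%type.

Definition valid_event (n d : nat) (e : dss_event n) : Prop :=
  e.1 \notin e.2 /\ #|e.2| = d.

(* Linear repair coefficients chosen for one repair:
   - enc_h j : (beta x alpha)  : helper j sends enc_h j *m S j (beta packets);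
   - enc_r   : (beta x alpha') : repairing node sends enc_r *m R (beta packets);
   - dec_h j, dec_r           : the new node stores a linear combination
     of all received packets. *)
Record repair_coeffs (F : fieldType) (n alpha alpha' beta : nat) := RepairCoeffs {
  enc_h : 'I_n -> 'M[F]_(beta, alpha);
  enc_r : 'M[F]_(beta, alpha');
  dec_h : 'I_n -> 'M[F]_(alpha, beta);
  dec_r : 'M[F]_(alpha, beta)
}.

Definition apply_repair (F : fieldType) (n alpha alpha' beta M : nat)
  (S : 'I_n -> 'M[F]_(alpha, M)) (R : 'M[F]_(alpha', M))
  (e : dss_event n) (c : repair_coeffs F n alpha alpha' beta) :
  'I_n -> 'M[F]_(alpha, M) :=
  fun i => if i == e.1 then
     \sum_(j in e.2) dec_h c j *m (enc_h c j *m S j)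
       + dec_r c *m (enc_r c *m R)
   else S i.

Definition repair_strategy (F : fieldType) (n alpha alpha' beta : nat) :=
  seq (dss_event n) -> dss_event n -> repair_coeffs F n alpha alpha' beta.

(* State of the complete nodes after the events [evs] (in chronological
   order); [past] is the history already processed. *)
Fixpoint run_aux (F : fieldType) (n alpha alpha' beta M : nat)
  (strat : repair_strategy F n alpha alpha' beta) (R : 'M[F]_(alpha', M))
  (past : seq (dss_event n)) (S : 'I_n -> 'M[F]_(alpha, M))
  (evs : seq (dss_event n)) : 'I_n -> 'M[F]_(alpha, M) :=
  match evs with
  | [::] => S
  | e :: evs' =>
      run_aux strat R (rcons past e) (apply_repair S R e (strat past e)) evs'
  end.

Definition run (F : fieldType) (n alpha alpha' beta M : nat)
  (strat : repair_strategy F n alpha alpha' beta) (R : 'M[F]_(alpha', M))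
  (S0 : 'I_n -> 'M[F]_(alpha, M)) (evs : seq (dss_event n)) :=
  run_aux strat R [::] S0 evs.

Definition reconstructible (F : fieldType) (n k alpha M : nat)
  (S : 'I_n -> 'M[F]_(alpha, M)) : Prop :=
  forall K : {set 'I_n}, #|K| = k ->
    exists D : 'I_n -> 'M[F]_(M, alpha),
      \sum_(i in K) D i *m S i = 1%:M.

(* Main.v *)
Require Import Defs.
From HB Require Import structures.
From mathcomp Require Import all_boot all_order all_algebra.
From mathcomp Require Import mxtens zify.
Set Implicit Arguments. Unset Strict Implicit. Unset Printing Implicit Defensive.
Import GRing.Theory.
Local Open Scope ring_scope.
From Stdlib Require Import ClassicalEpsilon.
Lemma span_ker (F : fieldType) (I : finType) (P : pred I) m m0 n
  (A : I -> 'M[F]_(m,n)) (A0 : 'M[F]_(m0,n)) :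
  (forall v : 'cV[F]_n, (forall i, P i -> A i *m v = 0) -> A0 *m v = 0 -> v = 0) ->
  exists (Dd : I -> 'M[F]_(n,m)) (D0 : 'M[F]_(n,m0)),
    \sum_(i | P i) Dd i *m A i + D0 *m A0 = 1%:M.
Proof.
move=> H.
set V := (\sum_(i | P i) <<A i>> + A0)%MS.
have sub1: (1%:M <= V)%MS.
  rewrite submxE mul1mx; apply/eqP/matrixP => r c.
  rewrite (_ : cokermx V r c = col c (cokermx V) r 0); last by rewrite !mxE.
  rewrite (H (col c (cokermx V))) ?mxE //.
    move=> i Pi; rewrite colE mulmxA.
    have : (A i <= V)%MS.
      apply: submx_trans (addsmxSl _ _).
      by apply: (sumsmx_sup i) => //; rewrite genmxE.
    by rewrite submxE => /eqP ->; rewrite mul0mx.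
  rewrite colE mulmxA.
  have : (A0 <= V)%MS by apply: addsmxSr.
  by rewrite submxE => /eqP ->; rewrite mul0mx.
case/sub_addsmxP: sub1 => u Hu.
have : (u.1 *m (\sum_(i | P i) <<A i>>)%MS <= \sum_(i | P i) <<A i>>)%MS by apply: submxMl.
case/sub_sums_genmxP => u_ Hu_.
by exists u_, u.2; rewrite -Hu_ Hu.
Qed.
Lemma sum_trunc (F : fieldType) (N m : nat) (G : nat -> F) :
  (m <= N)%N -> (forall i, (m <= i)%N -> G i = 0) ->
  \sum_(a < N) G a = \sum_(a < m) G a.
Proof.
move=> le hG; rewrite (big_ord_widen _ _ le) (bigID (fun a : 'I_N => (a < m)%N)) /=.
rewrite [X in _ + X]big1 ?addr0 // => i; rewrite -leqNgt; exact: hG.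
Qed.

Lemma vander (F : fieldType) (N m : nat) (v : nat -> F) (pts : seq F) :
  (m <= N)%N -> uniq pts -> (m <= size pts)%N -> (forall i, (m <= i)%N -> v i = 0) ->
  (forall x, x \in pts -> \sum_(a < N) v a * x ^+ a = 0) -> forall i, v i = 0.
Proof.
move=> le up sz hz hs.
have p0 : \poly_(i < m) v i = 0.
  apply: (roots_geq_poly_eq0 (rs := pts)) => //.
    apply/allP => x xp; rewrite /root horner_poly; apply/eqP.
    rewrite -(sum_trunc (G := fun a => v a * x ^+ a) le); first exact: hs.
    by move=> i /hz ->; rewrite mul0r.
  exact: leq_trans (size_poly _ _) sz.
move=> i; case: (ltnP i m) => him; last exact: hz.
by have := congr1 (fun p : {poly F} => p`_i) p0; rewrite /= coef_poly him coef0.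
Qed.

Lemma sum_trunc_ord (F : fieldType) (N m : nat) (le : (m <= N)%N) (G : 'I_N -> F) :
  (forall a : 'I_N, (m <= a)%N -> G a = 0) ->
  \sum_(a < N) G a = \sum_(a < m) G (widen_ord le a).
Proof.
move=> hG; rewrite (bigID (fun a : 'I_N => (a < m)%N)) /=.
rewrite [X in _ + X]big1 ?addr0; last by move=> i; rewrite -leqNgt; exact: hG.
exact: big_ord_narrow.
Qed.

Section Code.
Variables (F : fieldType) (n k d : nat) (xi : 'I_n -> F).
Hypothesis xi_inj : injective xi.
Hypothesis hk : (k <= d)%N.

Definition Aset := [set p : 'I_k * 'I_d.+1 | (p.1 <= p.2)%N].

Definition MM := #|Aset|.
Definition ev (p : 'I_MM) : 'I_k * 'I_d.+1 := enum_val (p : 'I_#|Aset|).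

Definition Tm (a b : 'I_d.+1) : 'rV[F]_MM :=
  \row_(p < MM) (((((ev p).1 : nat) == a) && (((ev p).2 : nat) == b))
          || ((((ev p).1 : nat) == b) && (((ev p).2 : nat) == a)))%:R.

Definition Sv (i : 'I_n) : 'M[F]_(d.+1, MM) :=
  \matrix_(b, p) \sum_(a < d.+1) xi i ^+ a * Tm a b 0 p.

Definition Rv : 'M[F]_(k, MM) :=
  \matrix_(b, p) Tm ord_max (widen_ord (leqW hk) b) 0 p.

Definition psi (i : 'I_n) : 'rV[F]_(d.+1) := \row_a xi i ^+ a.
Definition er (i : 'I_n) : 'rV[F]_k := \row_b xi i ^+ b.

Lemma Tm_sym a b : Tm a b = Tm b a.
Proof. by apply/matrixP => r p; rewrite !mxE orbC. Qed.

Lemma Tm_zero (a b : 'I_d.+1) : (k <= a)%N -> (k <= b)%N -> Tm a b = 0.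
Proof.
move=> ha hb; apply/matrixP => r p; rewrite !mxE.
have lt := ltn_ord (ev p).1.
have h1 : ((ev p).1 == a :> nat) = false.
  by apply/negbTE; apply: contraTneq lt => ->; rewrite -leqNgt.
have h2 : ((ev p).1 == b :> nat) = false.
  by apply/negbTE; apply: contraTneq lt => ->; rewrite -leqNgt.
by rewrite h1 h2.
Qed.

Lemma psi_sym f j : psi f *m Sv j = psi j *m Sv f.
Proof.
apply/matrixP => r p; rewrite !mxE.
under eq_bigr do rewrite !mxE big_distrr /=.
under [RHS]eq_bigr do rewrite !mxE big_distrr /=.
rewrite exchange_big /=; apply: eq_bigr => a _; apply: eq_bigr => b _.
by rewrite mulrCA; congr (_ * (_ * _)); rewrite Tm_sym.
Qed.

Lemma er_R f : er f *m Rv = row ord_max (Sv f).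
Proof.
apply/matrixP => r p; rewrite !mxE.
rewrite (sum_trunc_ord (leqW hk)); last first.
  by move=> a ha; rewrite Tm_zero ?mxE ?mulr0 //= ?leqW.
apply: eq_bigr => b _; rewrite !mxE.
by rewrite orbC.
Qed.

Lemma repair_ok f (H : {set 'I_n}) : #|H| = d ->
  exists (Dh : 'I_n -> 'M[F]_(d.+1, 1)) (Dr : 'M[F]_(d.+1, 1)),
    Sv f = \sum_(j in H) Dh j *m (psi f *m Sv j) + Dr *m (er f *m Rv).
Proof.
move=> cH.
have hker : forall v : 'M[F]_(d.+1, 1), (forall j, j \in H -> psi j *m v = 0) ->
    (delta_mx 0 (@ord_max d) : 'rV[F]_(d.+1)) *m v = 0 -> v = 0.
  move=> v hv h0.
  have vd : v ord_max 0 = 0.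
    by have := congr1 (fun M : 'M[F]_(1,1) => M 0 0) h0; rewrite -rowE !mxE.
  apply/matrixP => a c; rewrite [c]ord1 mxE.
  pose v' i := if (i < d.+1)%N then v (inord i) 0 else 0.
  have -> : v a 0 = v' a by rewrite /v' ltn_ord inord_val.
  apply: (@vander F d.+1 d v' [seq xi j | j <- enum H] (leqnSn d)).
  - by rewrite map_inj_uniq ?enum_uniq.
  - by rewrite size_map -(cardE H) cH.
  - move=> i hi; rewrite /v'; case: ifP => // hi2.
    have -> : inord i = (@ord_max d) by apply: val_inj; rewrite /= inordK //; apply/eqP; rewrite eqn_leq hi -ltnS hi2.
    exact: vd.
  - move=> x /mapP [j]; rewrite mem_enum => jH ->.
    have := congr1 (fun M : 'M[F]_(1,1) => M 0 0) (hv j jH); rewrite !mxE => E.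
    rewrite -[X in _ = X]E; by apply: eq_bigr => a' _; rewrite /v' ltn_ord inord_val !mxE mulrC.
have [Dh [Dr E]] := span_ker hker.
exists Dh, Dr.
rewrite -[LHS]mul1mx -E mulmxDl mulmx_suml; congr (_ + _).
  by apply: eq_bigr => j _; rewrite psi_sym mulmxA.
by rewrite er_R rowE mulmxA.
Qed.

Lemma Tm_delta (p : 'I_MM) :
  Tm (widen_ord (leqW hk) (ev p).1) (ev p).2 = delta_mx 0 p.
Proof.
apply/matrixP => r q; rewrite [r]ord1 !mxE /=; congr (_%:R).
congr (nat_of_bool _).
apply/idP/idP; last by move/eqP ->; rewrite !eqxx.
move=> hd; apply/eqP; apply: (@enum_val_inj _ (mem Aset)).
rewrite -/(ev q) -/(ev p).
have evin : forall q : 'I_MM, ((ev q).1 <= (ev q).2)%N.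
  by move=> q'; have := enum_valP (q' : 'I_#|Aset|); rewrite inE.
have hp := evin p; have hq := evin q.
case/orP: hd => /andP[/eqP e1 /eqP e2].
  by move: e1 e2; case: (ev q) => [? ?]; case: (ev p) => [? ?] /= ? ?; congr pair; apply: val_inj.
have e3 : ((ev p).1 : nat) = (ev p).2.
  by apply/eqP; rewrite eqn_leq hp -e1 -e2 hq.
move: e1 e2 e3; case: (ev q) => [? ?]; case: (ev p) => [? ?] /= ? ? ?; congr pair; apply: val_inj => /=; congruence.
Qed.

Lemma recon_ok (K : {set 'I_n}) : #|K| = k ->
  exists Dd : 'I_n -> 'M[F]_(MM, d.+1), \sum_(i in K) Dd i *m Sv i = 1%:M.
Proof.
move=> cK.
have hker : forall x : 'M[F]_(MM, 1), (forall i, i \in K -> Sv i *m x = 0) ->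
    (0 : 'M[F]_(1, MM)) *m x = 0 -> x = 0.
  move=> x hx _.
  pose mm a b := (Tm a b *m x) 0 0.
  have hcol : forall i, i \in K -> forall b, \sum_(a < d.+1) mm a b * xi i ^+ a = 0.
    move=> i iK b; have := congr1 (fun M : 'M[F]_(d.+1,1) => M b 0) (hx i iK); rewrite !mxE => E; rewrite -[X in _ = X]E.
    rewrite /mm /Sv; under [RHS]eq_bigr do rewrite mxE big_distrl /=.
    rewrite exchange_big /=; apply: eq_bigr => a _; rewrite mxE big_distrl /=.
    by apply: eq_bigr => p _; rewrite [LHS]mulrC mulrA.
  have col0 : forall b, (forall a : 'I_d.+1, (k <= a)%N -> mm a b = 0) -> forall a, mm a b = 0.
    move=> b hb a.
    pose v' i := if (i < d.+1)%N then mm (inord i) b else 0.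
    have -> : mm a b = v' a by rewrite /v' ltn_ord inord_val.
    apply: (@vander F d.+1 k v' [seq xi j | j <- enum K] (leqW hk)).
    - by rewrite map_inj_uniq ?enum_uniq.
    - by rewrite size_map -(cardE K) cK.
    - move=> i hi; rewrite /v'; case: ifP => // hi2; apply: hb; rewrite inordK //.
    - move=> y /mapP [j]; rewrite mem_enum => jK ->.
      rewrite -[X in _ = X](hcol j jK b); apply: eq_bigr => a' _.
      by rewrite /v' ltn_ord inord_val.
  have big : forall b : 'I_d.+1, (k <= b)%N -> forall a, mm a b = 0.
    move=> b hb; apply: col0 => a ha; by rewrite /mm Tm_zero // mul0mx mxE.
  have all0 : forall a b, mm a b = 0.
    move=> a b; apply: col0 => a' ha'.
    by rewrite /mm Tm_sym; apply: big.
  apply/matrixP => p c; rewrite [c]ord1 mxE.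
  have := all0 (widen_ord (leqW hk) (ev p).1) (ev p).2.
  by rewrite /mm Tm_delta -rowE mxE.
have [Dd [D0 E]] := span_ker hker.
exists Dd; by rewrite -E mulmx0 addr0.
Qed.

End Code.
Lemma tensDl (F : comPzRingType) m n p q (A B : 'M[F]_(m,n)) (C : 'M[F]_(p,q)) :
  (A + B) *t C = A *t C + B *t C.
Proof. by apply/matrixP => i j; rewrite !mxE mulrDl. Qed.

Lemma tens_sum (F : comPzRingType) (I : finType) (P : pred I) m n p q
  (A : I -> 'M[F]_(m,n)) (C : 'M[F]_(p,q)) :
  (\sum_(i | P i) A i) *t C = \sum_(i | P i) (A i *t C).
Proof.
apply: (big_morph (fun X => X *t C)); first by move=> X Y; rewrite tensDl.
exact: tens0mx.
Qed.

Lemma tens11 (F : comPzRingType) m p :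
  (1%:M : 'M[F]_m) *t (1%:M : 'M[F]_p) = 1%:M.
Proof.
apply/matrixP => i j.
case: (mxtens_indexP i) => i1 i2; case: (mxtens_indexP j) => j1 j2.
rewrite tensmxE !mxE (can_eq (@mxtens_indexK _ _)) xpair_eqE.
by case: (i1 == j1); case: (i2 == j2); rewrite /= ?mulr1 ?mulr0 ?mul0r.
Qed.

Lemma cast_mid (F : pzRingType) m n n' p (e : n = n') (A : 'M[F]_(m,n)) (B : 'M[F]_(n,p)) :
  castmx (erefl m, e) A *m castmx (e, erefl p) B = A *m B.
Proof. by case: n' / e; rewrite !castmx_id. Qed.

Lemma inner_count (a D : nat) : (\sum_(b < D) (a <= b)%N)%N = (D - a)%N.
Proof.
elim: D => [|D IH]; first by rewrite big_ord0.
rewrite big_ord_recr /= IH; case: (leqP a D) => h /=; lia.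
Qed.

Lemma outer_count (k D : nat) : (k <= D)%N -> (2 * \sum_(a < k) (D - a))%N = (k * (2 * D - k + 1))%N.
Proof.
elim: k => [|k IH] h; first by rewrite big_ord0.
rewrite big_ord_recr /= mulnDr IH; last by apply: ltnW.
have [t ->] : exists t, D = (k.+1 + t)%N by exists (D - k.+1)%N; lia.
nia.
Qed.

Lemma card_Aset (k d : nat) : (k <= d)%N -> (2 * #|Aset k d|)%N = (k * (2 * d - k + 3))%N.
Proof.
move=> hk.
have -> : #|Aset k d| = (\sum_(a < k) (d.+1 - a))%N.
  rewrite -sum1_card big_mkcond /=.
  under [RHS]eq_bigr do rewrite -inner_count.
  rewrite pair_bigA /=; apply: eq_bigr => -[a b] _.
  by rewrite inE /=; case: leqP.
rewrite outer_count; last by apply: leqW.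
have [t ->] : exists t, d = (k + t)%N by exists (d - k)%N; lia.
nia.
Qed.

Theorem proposition4 (n k d beta M : nat) :
  (1 <= k)%N -> (k <= d)%N -> (d <= n - 1)%N ->
  (0 < beta)%N ->
  (2 * M = k * (2 * d - k + 3) * beta)%N ->
  exists q0 : nat, forall F : finFieldType, (q0 <= #|F|)%N ->
    exists (S0 : 'I_n -> 'M[F]_(d.+1 * beta, M))
           (R : 'M[F]_(k * beta, M))
           (strat : repair_strategy F n (d.+1 * beta) (k * beta) beta),
      forall evs : seq (dss_event n),
        (forall e, e \in evs -> valid_event d e) ->
        reconstructible k (run strat R S0 evs).
Proof.
move=> hk1 hkd hdn hb hM.
exists n => F hF.
pose xi (i : 'I_n) : F := enum_val (widen_ord hF i).
have xi_inj : injective xi.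
  by move=> i j /enum_val_inj e; apply/val_inj; exact: (congr1 val e).
have eM : M = (MM k d * beta)%N.
  by apply/eqP; rewrite -(eqn_pmul2l (isT : (0 < 2)%N)) mulnA /MM card_Aset // hM.
subst M.

pose S0 (i : 'I_n) := Sv k d xi i *t (1%:M : 'M[F]_beta).
pose R := Rv F hkd *t (1%:M : 'M[F]_beta).
pose enc m (u : 'M[F]_(1, m)) : 'M[F]_(beta, m * beta) :=
  castmx (mul1n beta, erefl) (u *t (1%:M : 'M[F]_beta)).
pose dec m (X : 'M[F]_(m, 1)) : 'M[F]_(m * beta, beta) :=
  castmx (erefl, mul1n beta) (X *t (1%:M : 'M[F]_beta)).
pose P (e : dss_event n) (DD : ('I_n -> 'M[F]_(d.+1, 1)) * 'M[F]_(d.+1, 1)) :=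
  Sv k d xi e.1 = \sum_(j in e.2) DD.1 j *m (psi d xi e.1 *m Sv k d xi j)
                   + DD.2 *m (er k xi e.1 *m Rv F hkd).
pose pick e := epsilon (inhabits ((fun _ => 0), 0)) (P e).
pose strat : repair_strategy F n (d.+1 * beta) (k * beta) beta :=
  fun _ e => RepairCoeffs (fun _ => enc _ (psi d xi e.1)) (enc _ (er k xi e.1))
                          (fun j => dec _ ((pick e).1 j)) (dec _ (pick e).2).
exists S0, R, strat.
have lift : forall m p (X : 'M[F]_(m, 1)) (u : 'M[F]_(1, p)) (Y : 'M[F]_(p, MM k d)),
    dec _ X *m (enc _ u *m (Y *t (1%:M : 'M[F]_beta))) = (X *m (u *m Y)) *t (1%:M : 'M[F]_beta).
  move=> m p X u Y; rewrite mulmxA cast_mid !tensmx_mul !mulmx1.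
  by rewrite mulmxA.
have rep : forall past e, valid_event d e -> forall S : 'I_n -> 'M[F]_(d.+1 * beta, MM k d * beta),
    (forall i, S i = S0 i) -> forall i, apply_repair S R e (strat past e) i = S0 i.
  move=> past e [_ cH] S hS i; rewrite /apply_repair.
  case: eqP => [->|_]; last exact: hS.
  have hP : P e (pick e).
    apply: epsilon_spec.
    have [Dh [Dr E]] := repair_ok xi_inj hkd e.1 cH.
    by exists (Dh, Dr).
  rewrite /S0 [in RHS]hP tensDl tens_sum /=; congr (_ + _).
    by apply: eq_bigr => j _; rewrite hS /S0 lift.
  by rewrite /R lift.
have run_ok : forall evs past S, (forall i, S i = S0 i) ->
    (forall e, e \in evs -> valid_event d e) ->
    forall i, run_aux strat R past S evs i = S0 i.
  elim=> [|e evs IH] past S hS hv i /=; first exact: hS.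
  apply: IH => [j|e' he']; last by apply: hv; rewrite inE he' orbT.
  by apply: rep => //; apply: hv; rewrite inE eqxx.
move=> evs hv K cK.
have [Dd hD] := recon_ok xi_inj hkd cK.
exists (fun i => Dd i *t (1%:M : 'M[F]_beta)).
rewrite (eq_bigr (fun i => (Dd i *m Sv k d xi i) *t (1%:M : 'M[F]_beta))); last first.
  by move=> i _; rewrite /run run_ok // tensmx_mul mulmx1.
by rewrite -tens_sum hD tens11.
Qed.
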